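(* Let $A$ be a real $m\times m$ matrix, $f_\delta\in\mathbb{R}^m$, $q\in(0,1)$, $\alpha_0>0$, and define $G_0=0$, $G_n=qG_{n-1}+(1-q)\alpha_0q^n\|Q_{\alpha_0q^n}^{-1}f_\delta\|$ for $n\ge1$. Let $D_n:=\alpha_0q^{n+1}\|Q_{\alpha_0q^{n+1}}^{-1}f_\delta\|-G_n$, so that $G_{n+1}-G_n=(1-q)D_n$. If $D_{n_c}<0$ for some integer $n_c\ge1$ (equivalently $G_{n_c+1}<G_{n_c}$), then $D_n<0$ for all $n\ge n_c$; consequently $G_{n+1}<G_n$ for all $n\ge n_c$.
   Context: $A^*$ is the transpose of $A$, $Q:=AA^*$, $Q_a:=Q+aI$ for $a>0$; $\|\cdot\|$ is the Euclidean norm. *)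

(* Defs.v *)
From HB Require Import structures.
From mathcomp Require Import all_boot all_order all_algebra.
Set Implicit Arguments. Unset Strict Implicit. Unset Printing Implicit Defensive.
Import Order.TTheory GRing.Theory Num.Theory.
Local Open Scope ring_scope.

Definition enorm (R : rcfType) (m : nat) (v : 'cV[R]_m) : R :=
  Num.sqrt (\sum_(i < m) v i ord0 ^+ 2).

Definition Qmx (R : rcfType) (m : nat) (A : 'M[R]_m) : 'M[R]_m := A *m A^T.
Definition Qa (R : rcfType) (m : nat) (A : 'M[R]_m) (a : R) : 'M[R]_m :=
  Qmx A + a%:M.

Definition phi (R : rcfType) (m : nat) (A : 'M[R]_m) (f : 'cV[R]_m)
  (q alpha0 : R) (n : nat) : R :=
  alpha0 * q ^+ n * enorm (invmx (Qa A (alpha0 * q ^+ n)) *m f).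

Fixpoint Gseq (R : rcfType) (m : nat) (A : 'M[R]_m) (f : 'cV[R]_m)
  (q alpha0 : R) (n : nat) : R :=
  match n with
  | 0 => 0
  | n'.+1 => q * Gseq A f q alpha0 n' + (1 - q) * phi A f q alpha0 n'.+1
  end.

Definition Dseq (R : rcfType) (m : nat) (A : 'M[R]_m) (f : 'cV[R]_m)
  (q alpha0 : R) (n : nat) : R :=
  phi A f q alpha0 n.+1 - Gseq A f q alpha0 n.

(* Main.v *)
Require Import Defs.
From HB Require Import structures.
From mathcomp Require Import all_boot all_order all_algebra.
Import Order.TTheory GRing.Theory Num.Theory.
Local Open Scope ring_scope.

Lemma key (R : realDomainType) (a b S T P : R) : 0 < b -> b < a ->
  0 <= b*(P - S) - a*(T - P) -> 0 <= S - P - (P - T) -> T <= S.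
Proof.
move=> hb hab h1 h2.
have hab0 : 0 < a - b by rewrite subr_gt0.
rewrite -subr_ge0 -(pmulr_rge0 _ hab0).
have e : (a - b) * (S - T) = (b*(P - S) - a*(T - P)) *+ 2 + (a+b)*(S - P - (P - T)).
  rewrite !mulrBr !mulrBl !mulrDl !mulr2n !opprD !opprK !addrA.
  by rewrite [RHS](@GRing.add R).[ACl ((((9*2)*3)*16) * ((((((6*10)*(7*15))*(12*1))*(14*5))*(11*4))*(13*8)))] !addNr !addr0.
have ha : 0 < a by exact: lt_trans hab.
by rewrite e addr_ge0 // ?mulrn_wge0 // mulr_ge0 // addr_ge0 // ltW.
Qed.

Section S.
Variables (R : rcfType) (m : nat).
Implicit Types u v w z : 'cV[R]_m.

Definition dot u v : R := \sum_(i < m) u i ord0 * v i ord0.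

Lemma dotC u v : dot u v = dot v u.
Proof. by apply: eq_bigr => i _; rewrite mulrC. Qed.
Lemma dotDl u v w : dot (u + v) w = dot u w + dot v w.
Proof. by rewrite /dot -big_split; apply: eq_bigr => i _; rewrite mxE mulrDl. Qed.
Lemma dotNl u w : dot (- u) w = - dot u w.
Proof. by rewrite /dot -sumrN; apply: eq_bigr => i _; rewrite mxE mulNr. Qed.
Lemma dotZl c u w : dot (c *: u) w = c * dot u w.
Proof. by rewrite /dot mulr_sumr; apply: eq_bigr => i _; rewrite mxE mulrA. Qed.
Lemma dotDr u v w : dot w (u + v) = dot w u + dot w v.
Proof. by rewrite dotC dotDl !(dotC w). Qed.
Lemma dotNr u w : dot w (- u) = - dot w u.
Proof. by rewrite dotC dotNl dotC. Qed.
Lemma dotZr c u w : dot w (c *: u) = c * dot w u.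
Proof. by rewrite dotC dotZl dotC. Qed.
Lemma dotBl u v w : dot (u - v) w = dot u w - dot v w.
Proof. by rewrite dotDl dotNl. Qed.
Lemma dotBr u v w : dot w (u - v) = dot w u - dot w v.
Proof. by rewrite dotDr dotNr. Qed.
Lemma dot_ge0 u : 0 <= dot u u.
Proof. by apply: sumr_ge0 => i _; rewrite -expr2 sqr_ge0. Qed.
Lemma dotE u v : dot u v = (u^T *m v) ord0 ord0.
Proof. by rewrite mxE; apply: eq_bigr => i _; rewrite mxE. Qed.

Lemma dotQ (A : 'M[R]_m) w : 0 <= dot w (Qmx A *m w).
Proof.
rewrite dotE /Qmx.
have -> : w^T *m (A *m A^T *m w) = (A^T *m w)^T *m (A^T *m w).
  by rewrite trmx_mul trmxK !mulmxA.
rewrite -dotE.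
exact: dot_ge0.
Qed.

Lemma dotx0 u : dot u 0 = 0.
Proof. by rewrite /dot big1 // => k _; rewrite mxE mulr0. Qed.

Lemma dot0 u : dot u u = 0 -> u = 0.
Proof.
move=> h; apply/matrixP => i j; rewrite ord1 [RHS]mxE.
have H := psumr_eq0P (P := predT) (F := fun k : 'I_m => u k ord0 * u k ord0)
   (fun k _ => ltac:(by rewrite /= -expr2 sqr_ge0)) h.
by have /eqP := H i isT; rewrite mulf_eq0 orbb => /eqP.
Qed.

Lemma Qa_sym (A : 'M[R]_m) a : (Qa A a)^T = Qa A a.
Proof. by rewrite /Qa /Qmx linearD /= tr_scalar_mx trmx_mul trmxK. Qed.

Lemma QaE (A : 'M[R]_m) a w : Qa A a *m w = Qmx A *m w + a *: w.
Proof. by rewrite /Qa mulmxDl mul_scalar_mx. Qed.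

Lemma Qa_unit (A : 'M[R]_m) a : 0 < a -> Qa A a \in unitmx.
Proof.
move=> ha; rewrite -row_free_unit -kermx_eq0; apply/eqP/matrixP => i j.
have hr : row i (kermx (Qa A a)) *m Qa A a = 0 by rewrite -row_mul mulmx_ker row0.
have hz : Qa A a *m (row i (kermx (Qa A a)))^T = 0.
  by rewrite -[X in X *m _]Qa_sym -trmx_mul hr trmx0.
set z := (row i (kermx (Qa A a)))^T in hz.
have : dot z (Qa A a *m z) = 0 by rewrite hz dotx0.
rewrite QaE dotDr dotZr => /eqP; rewrite paddr_eq0 ?dotQ ?mulr_ge0 ?dot_ge0 ?ltW //.
case/andP=> _; rewrite mulf_eq0 gt_eqF //= => /eqP /dot0 z0.
have := congr1 (fun M : 'cV[R]_m => M j ord0) z0.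
by rewrite /z !mxE.
Qed.

Lemma enormE (v : 'cV[R]_m) : enorm v = Num.sqrt (dot v v).
Proof. by rewrite /enorm /dot; congr Num.sqrt; apply: eq_bigr => i _; rewrite expr2. Qed.

Lemma scale_enorm c (v : 'cV[R]_m) : 0 <= c -> c * enorm v = Num.sqrt (dot (c *: v) (c *: v)).
Proof.
move=> hc; rewrite enormE dotZl dotZr mulrA -expr2 sqrtrM ?sqr_ge0 //.
by rewrite sqrtr_sqr ger0_norm.
Qed.

Lemma phim (A : 'M[R]_m) (f : 'cV[R]_m) a b : 0 < b -> b < a ->
  b * enorm (invmx (Qa A b) *m f) <= a * enorm (invmx (Qa A a) *m f).
Proof.
move=> hb hab; have ha : 0 < a by exact: lt_trans hab.
set x := invmx (Qa A a) *m f; set y := invmx (Qa A b) *m f.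
have hQx : Qmx A *m x = f - a *: x.
  by rewrite -{1}[f](mulKVmx (Qa_unit A a ha)) -/x QaE addrK.
have hQy : Qmx A *m y = f - b *: y.
  by rewrite -{1}[f](mulKVmx (Qa_unit A b hb)) -/y QaE addrK.
set u := a *: x; set v := b *: y.
have hQw : Qmx A *m (x - y) = v - u.
  by rewrite mulmxBr hQx hQy opprB addrC addrA addrNK.
have h1 : 0 <= dot (b *: u - a *: v) (v - u).
  have -> : b *: u - a *: v = (a * b) *: (x - y).
    by rewrite /u /v !scalerA scalerBr [b * a]mulrC.
  rewrite dotZl mulr_ge0 //; first by rewrite mulr_ge0 ?ltW.
  by rewrite -hQw; apply: dotQ.
have h2 := dot_ge0 (u - v).
rewrite scale_enorm ?(ltW hb) // scale_enorm ?(ltW ha) // -/u -/v ler_sqrt ?dot_ge0 //.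
clearbody u v; move: h1 h2; rewrite !dotBl !dotZl !dotBr [dot v u]dotC.
exact: key.
Qed.
End S.

Section M.
Variables (R : rcfType) (m : nat) (A : 'M[R]_m) (f : 'cV[R]_m) (q alpha0 : R).
Local Notation G := (Gseq A f q alpha0).
Local Notation D := (Dseq A f q alpha0).
Local Notation ph := (phi A f q alpha0).

Lemma Gstep n : G n.+1 = G n + (1 - q) * D n.
Proof.
rewrite /Dseq /= mulrBr !mulrBl !mul1r opprB !addrA.
by rewrite [RHS](@GRing.add R).[ACl (((4*2)*3)*(1*5))] addrN addr0.
Qed.

Lemma Dstep n : D n.+1 = q * D n + (ph n.+2 - ph n.+1).
Proof.
rewrite /Dseq Gstep /Dseq mulrBr !mulrBl !mul1r !opprD !opprK !addrA.
rewrite [in RHS]mulrBr ?addrA.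
by rewrite [LHS](@GRing.add R).[ACl ((((4*6)*1)*3)*(2*5))] addNr addr0.
Qed.

Lemma phdec n : 0 < q -> q < 1 -> 0 < alpha0 -> ph n.+2 <= ph n.+1.
Proof.
move=> hq0 hq1 ha; rewrite /phi.
have hb : 0 < alpha0 * q ^+ n.+1 by rewrite mulr_gt0 // exprn_gt0.
apply: phim; first by rewrite exprS mulrCA mulr_gt0.
by rewrite [q ^+ n.+2]exprSr mulrA gtr_pMr.
Qed.

End M.

Theorem lemma2p5 (R : rcfType) (m : nat) (A : 'M[R]_m) (f : 'cV[R]_m)
  (q alpha0 : R) (hq0 : 0 < q) (hq1 : q < 1) (ha : 0 < alpha0)
  (nc : nat) (hnc : (1 <= nc)%N) (hD : Dseq A f q alpha0 nc < 0) :
  forall n : nat, (nc <= n)%N ->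
    Dseq A f q alpha0 n < 0 /\ Gseq A f q alpha0 n.+1 < Gseq A f q alpha0 n.
Proof.
have HD : forall n, (nc <= n)%N -> Dseq A f q alpha0 n < 0.
  elim=> [|n IH]; first by rewrite leqn0 => /eqP <-.
  rewrite leq_eqVlt ltnS => /orP [/eqP <- // | hn].
  rewrite Dstep -(addr0 0) ltr_leD //.
    by rewrite pmulr_rlt0 // IH.
  by rewrite subr_le0 phdec.
move=> n hn; split; first exact: HD.
by rewrite Gstep gtrDl pmulr_rlt0 ?subr_gt0 // HD.
Qed.
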